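(* Under the standing setup, assume that $f$ is bounded, i.e. $\sup_{q\in\mathcal P}\|f_q\|_\infty<\infty$. Then there exists a constant $L>0$ such that $\|\mathscr S(t)u_0-u_0\|_\infty\le Lt\|u_0\|_\infty$ for all $t\ge0$ and $u_0\in\mathbb R^d$.
   Context: Standing setup: $d\in\mathbb N$; vectors in $\mathbb R^d$ with $\|u\|_\infty=\max_i|u_i|$; inequalities and suprema of vectors are componentwise; reals are identified with constant vectors. A $Q$-matrix is $q\in\mathbb R^{d\times d}$ with $q_{ii}\le0$, $q_{ij}\ge0$ ($i\ne j$), $\sum_jq_{ij}=0$. Let $\mathcal P$ be a set of $Q$-matrices and $f=(f_q)_{q\in\mathcal P}\subset\mathbb R^d$ with $\sup_{q\in\mathcal P}f_q=f_{q_0}=0$ for some $q_0\in\mathcal P$, such that $\mathcal Qu:=\sup_{q\in\mathcal P}(qu+f_q)$ is finite for every $u\in\mathbb R^d$. For $q\in\mathcal P$, $t\ge0$: $S_q(t)u_0:=e^{tq}u_0+\int_0^te^{sq}f_q\,ds$. For $h\ge0$: $\mathcal E_hu_0:=\sup_{q\in\mathcal P}S_q(h)u_0$. $P$ is the set of finite subsets $\pi\subset[0,\infty)$ with $0\in\pi$; $P_t:=\{\pi\in P:\max\pi=t\}$. For $\pi=\{t_0,\dots,t_m\}$ with $0=t_0<\dots<t_m$, $m\ge1$, $\mathcal E_\pi:=\mathcal E_{t_1-t_0}\circ\cdots\circ\mathcal E_{t_m-t_{m-1}}$, and $\mathcal E_{\{0\}}:=\mathcal E_0$. The Nisio semigroup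 of $(\mathcal P,f)$ is $\mathscr S(t)u_0:=\sup_{\pi\in P_t}\mathcal E_\pi u_0$. *)

(* Defs.v *)
From Stdlib Require Import Arith Reals Lra List Sorting.Sorted ClassicalEpsilon.
Open Scope R_scope.

(* Vectors in R^d are functions nat -> R (only indices i < d matter);
   matrices in R^{d x d} are functions nat -> nat -> R. *)
Definition vec := nat -> R.
Definition mat := nat -> nat -> R.

Fixpoint sumR (n : nat) (g : nat -> R) : R :=
  match n with O => 0 | S m => sumR m g + g m end.

Fixpoint norm_inf_aux (n : nat) (u : vec) : R :=
  match n with O => 0 | S m => Rmax (norm_inf_aux m u) (Rabs (u m)) end.
Definition norm_inf (d : nat) (u : vec) : R := norm_inf_aux d u.

Definition mv (d : nat) (q : mat) (u : vec) : vec :=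
  fun i => sumR d (fun j => q i j * u j).

Definition is_Qmatrix (d : nat) (q : mat) : Prop :=
  (forall i, (i < d)%nat -> q i i <= 0) /\
  (forall i j, (i < d)%nat -> (j < d)%nat -> i <> j -> 0 <= q i j) /\
  (forall i, (i < d)%nat -> sumR d (fun j => q i j) = 0).

Fixpoint mpowv (d : nat) (q : mat) (k : nat) (u : vec) : vec :=
  match k with O => u | S k' => mv d q (mpowv d q k' u) end.

Definition expmv (d : nat) (t : R) (q : mat) (u : vec) : vec :=
  fun i => epsilon (inhabits 0)
    (fun l => infinite_sum (fun k => t ^ k / INR (fact k) * mpowv d q k u i) l).

Definition integ (g : R -> R) (a b : R) : R :=
  epsilon (inhabits 0)
    (fun l => exists pr : Riemann_integrable g a b, RiemannInt pr = l).

Definition Rsup (A : R -> Prop) : R := epsilon (inhabits 0) (fun l => is_lub A l).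

Definition Sq (d : nat) (q : mat) (fq : vec) (t : R) (u0 : vec) : vec :=
  fun i => expmv d t q u0 i + integ (fun s => expmv d s q fq i) 0 t.

Definition Ecal (d : nat) (P : mat -> Prop) (f : mat -> vec) (h : R) (u0 : vec) : vec :=
  fun i => Rsup (fun x => exists q, P q /\ x = Sq d q (f q) h u0 i).

(* A finite set pi = {t0 < ... < tm} is represented by its increasing list
   of elements.  pi in P_t: 0 in pi, pi subset [0,oo), max pi = t. *)
Definition partition_of (t : R) (l : list R) : Prop :=
  (exists rest, l = 0 :: rest) /\ Sorted Rlt l /\ last l 0 = t.

Fixpoint Epi_aux (d : nat) (P : mat -> Prop) (f : mat -> vec)
    (tprev : R) (rest : list R) (u : vec) : vec :=
  match rest with
  | nil => u
  | t1 :: rest' => Ecal d P f (t1 - tprev) (Epi_aux d P f t1 rest' u)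
  end.

Definition Epi (d : nat) (P : mat -> Prop) (f : mat -> vec) (l : list R) (u : vec) : vec :=
  match l with
  | nil => u
  | t0 :: nil => Ecal d P f 0 u
  | t0 :: rest => Epi_aux d P f t0 rest u
  end.

Definition Nisio (d : nat) (P : mat -> Prop) (f : mat -> vec) (t : R) (u0 : vec) : vec :=
  fun i => Rsup (fun x => exists l, partition_of t l /\ x = Epi d P f l u0 i).

(* Main.v *)
Require Import Defs.
From Coquelicot Require Import Coquelicot.
From Stdlib Require Import Reals List Lra Lia Sorting.Sorted ClassicalEpsilon FunctionalExtensionality.
Open Scope R_scope.

Lemma series_le (a b : nat -> R) la lb :
  is_series a la -> is_series b lb -> (forall n, a n <= b n) -> la <= lb.
Proof.
  intros Ha Hb H.
  assert (Rbar_le la lb); [|exact H0].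
  apply (is_lim_seq_le (sum_n a) (sum_n b)); [|exact Ha|exact Hb].
  intro n. rewrite !sum_n_Reals. apply sum_Rle. intros; apply H.
Qed.

Lemma series_const_partial (a : nat -> R) c :
  (forall n, sum_f_R0 a n = c) -> is_series a c.
Proof.
  intros H. apply is_series_Reals. intros eps Heps. exists 0%nat. intros n _.
  rewrite H. unfold R_dist. rewrite Rminus_diag, Rabs_R0. lra.
Qed.

Lemma series_nonneg (a : nat -> R) la :
  is_series a la -> (forall n, 0 <= a n) -> 0 <= la.
Proof.
  intros Ha H. apply (series_le (fun _ => 0) a); auto.
  apply series_const_partial. induction n; simpl; auto. rewrite IHn; ring.
Qed.

Lemma series_lin (a b : nat -> R) la lb x y :
  is_series a la -> is_series b lb ->
  is_series (fun n => x * a n + y * b n) (x * la + y * lb).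
Proof.
  intros Ha Hb.
  apply (is_series_plus (fun n => x * a n) (fun n => y * b n)).
  - apply (is_series_scal x a la Ha).
  - apply (is_series_scal y b lb Hb).
Qed.

Lemma sumR_ext n g h : (forall j, (j < n)%nat -> g j = h j) -> sumR n g = sumR n h.
Proof. induction n; simpl; intros; auto. rewrite IHn; [|intros; apply H; lia]. rewrite H; auto. Qed.

Lemma sumR_lin n g h a b : sumR n (fun j => a * g j + b * h j) = a * sumR n g + b * sumR n h.
Proof. induction n; simpl; [ring|]. rewrite IHn; ring. Qed.

Lemma sumR_le n g h : (forall j, (j < n)%nat -> g j <= h j) -> sumR n g <= sumR n h.
Proof. induction n; simpl; intros; [lra|]. assert (g n <= h n) by (apply H; lia).
  assert (sumR n g <= sumR n h) by (apply IHn; intros; apply H; lia). lra. Qed.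

Lemma sumR_abs n g : Rabs (sumR n g) <= sumR n (fun j => Rabs (g j)).
Proof. induction n; simpl. rewrite Rabs_R0; lra.
  eapply Rle_trans; [apply Rabs_triang|]. lra. Qed.

Lemma sumR_zero n : sumR n (fun _ => 0) = 0.
Proof. induction n; simpl; [ring|]. rewrite IHn; ring. Qed.

Lemma sumR_ind n i c : (i < n)%nat ->
  sumR n (fun j => if Nat.eq_dec j i then c else 0) = c.
Proof.
  induction n; intros; [lia|]. simpl.
  destruct (Nat.eq_dec n i).
  - subst. match goal with |- sumR ?m _ + _ = _ => rewrite (sumR_ext m _ (fun _ => 0)) end.
    + destruct (Nat.eq_dec i i); [|lia]. rewrite sumR_zero. ring.
    + intros. destruct (Nat.eq_dec j i); [lia|auto].
  - rewrite IHn; [ring|lia].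
Qed.

Lemma sumR_sum n m (g : nat -> nat -> R) :
  sumR n (fun j => sum_f_R0 (fun k => g k j) m) = sum_f_R0 (fun k => sumR n (g k)) m.
Proof.
  induction m; simpl.
  - reflexivity.
  - rewrite <- IHm. rewrite <- (Rmult_1_l (sumR n (fun j => sum_f_R0 _ m))).
    rewrite <- (Rmult_1_l (sumR n (g (S m)))). rewrite <- sumR_lin.
    apply sumR_ext. intros; ring.
Qed.

Lemma norm_aux_nonneg n u : 0 <= norm_inf_aux n u.
Proof. induction n; simpl; [lra|]. eapply Rle_trans; [exact IHn| apply Rmax_l]. Qed.

Lemma norm_nonneg d u : 0 <= norm_inf d u.
Proof. apply norm_aux_nonneg. Qed.

Lemma norm_ge d u i : (i < d)%nat -> Rabs (u i) <= norm_inf d u.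
Proof.
  unfold norm_inf. induction d; intros; [lia|]. simpl.
  destruct (Nat.eq_dec i d). subst; apply Rmax_r.
  eapply Rle_trans; [apply IHd; lia| apply Rmax_l].
Qed.

Lemma norm_le d u c : 0 <= c -> (forall i, (i < d)%nat -> Rabs (u i) <= c) -> norm_inf d u <= c.
Proof.
  unfold norm_inf. induction d; intros; simpl; [lra|].
  apply Rmax_lub. apply IHd; auto. apply H0; lia.
Qed.

Lemma mv_ext d q u v i : (forall j, (j < d)%nat -> u j = v j) -> mv d q u i = mv d q v i.
Proof. intros H. unfold mv. apply sumR_ext. intros; rewrite H; auto. Qed.

Lemma mv_lin d q u v a b i :
  mv d q (fun j => a * u j + b * v j) i = a * mv d q u i + b * mv d q v i.
Proof. unfold mv. rewrite <- sumR_lin. apply sumR_ext. intros; ring. Qed.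

Lemma mpow_lin d q k u v a b i :
  mpowv d q k (fun j => a * u j + b * v j) i = a * mpowv d q k u i + b * mpowv d q k v i.
Proof.
  revert i; induction k; intros; simpl; auto.
  rewrite <- mv_lin. apply mv_ext. intros; auto.
Qed.

Lemma mpow_ext d q k u v i : (forall j, (j < d)%nat -> u j = v j) -> (i < d)%nat ->
  mpowv d q k u i = mpowv d q k v i.
Proof.
  intros H; revert i; induction k; intros; simpl; auto.
  apply mv_ext. intros; auto.
Qed.

Section QM.
Variables (d : nat) (q : mat) (D : R).
Hypothesis HQ : is_Qmatrix d q.
Hypothesis HD : forall i, (i < d)%nat -> - q i i <= D.
Hypothesis HD0 : 0 <= D.

Lemma row_abs i : (i < d)%nat -> sumR d (fun j => Rabs (q i j)) = -2 * q i i.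
Proof.
  intros Hi. destruct HQ as [H1 [H2 H3]].
  rewrite (sumR_ext _ _ (fun j => 1 * q i j + 1 * (if Nat.eq_dec j i then -2 * q i i else 0))).
  - rewrite sumR_lin, H3, sumR_ind; auto. ring.
  - intros j Hj. destruct (Nat.eq_dec j i).
    + subst. rewrite Rabs_left1; [ring| apply H1; auto].
    + rewrite Rabs_right; [ring|]. apply Rle_ge, H2; auto.
Qed.

Lemma mv_bound u i : (i < d)%nat -> Rabs (mv d q u i) <= 2 * D * norm_inf d u.
Proof.
  intros Hi. unfold mv. eapply Rle_trans; [apply sumR_abs|].
  apply Rle_trans with (sumR d (fun j => Rabs (q i j) * norm_inf d u)).
  - apply sumR_le. intros. rewrite Rabs_mult. apply Rmult_le_compat_l; [apply Rabs_pos|].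
    apply norm_ge; auto.
  - rewrite (sumR_ext _ _ (fun j => norm_inf d u * Rabs (q i j) + 0 * 0)) by (intros; ring).
    rewrite sumR_lin, row_abs; auto.
    assert (0 <= norm_inf d u) by apply norm_nonneg.
    specialize (HD i Hi). nra.
Qed.

Lemma mpow_norm k u : norm_inf d (mpowv d q k u) <= (2 * D) ^ k * norm_inf d u.
Proof.
  induction k; simpl.
  - lra.
  - apply norm_le.
    + apply Rmult_le_pos; [apply Rmult_le_pos; [lra| apply pow_le; lra]|apply norm_nonneg].
    + intros i Hi. eapply Rle_trans; [apply mv_bound; auto|].
      replace (2 * D * ((2 * D) ^ k) * norm_inf d u) with (2 * D * ((2 * D) ^ k * norm_inf d u)) by ring.
      apply Rmult_le_compat_l; [lra|auto].
Qed.

Lemma mpow_bound k u i : (i < d)%nat -> Rabs (mpowv d q k u i) <= (2 * D) ^ k * norm_inf d u.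
Proof. intros; eapply Rle_trans; [apply norm_ge; eauto| apply mpow_norm]. Qed.

Lemma mpow_const k c i : (i < d)%nat -> mpowv d q (S k) (fun _ => c) i = 0.
Proof.
  destruct HQ as [_ [_ H3]].
  revert i; induction k; intros i Hi; simpl.
  - unfold mv. rewrite (sumR_ext _ _ (fun j => c * q i j + 0 * 0)) by (intros; ring).
    rewrite sumR_lin, H3; auto; ring.
  - rewrite (mv_ext _ _ _ (fun _ => 0)).
    + unfold mv. rewrite (sumR_ext _ _ (fun _ => 0)) by (intros; ring). apply sumR_zero.
    + intros; apply IHk; auto.
Qed.
End QM.

Lemma exp_series x : is_series (fun n => x ^ n / INR (Factorial.fact n)) (exp x).
Proof.
  generalize (is_exp_Reals x). intros H. apply is_pseries_R in H.
  eapply is_series_ext; [|exact H]. intros n; simpl. unfold Rdiv; ring.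
Qed.

Definition eterm d q h u i k := h ^ k / INR (Factorial.fact k) * mpowv d q k u i.

Section EX.
Variables (d : nat) (q : mat) (D : R).
Hypothesis HQ : is_Qmatrix d q.
Hypothesis HD : forall i, (i < d)%nat -> - q i i <= D.
Hypothesis HD0 : 0 <= D.

Lemma fact_pos k : 0 < INR (Factorial.fact k).
Proof. apply INR_fact_lt_0. Qed.

Lemma eterm_bound h u i k : (i < d)%nat ->
  Rabs (eterm d q h u i k) <= norm_inf d u * ((2 * D * Rabs h) ^ k / INR (Factorial.fact k)).
Proof.
  intros Hi. unfold eterm. rewrite Rabs_mult. unfold Rdiv. rewrite Rabs_mult.
  rewrite <- RPow_abs. rewrite (Rabs_right (/ INR (Factorial.fact k))) by (apply Rle_ge, Rlt_le, Rinv_0_lt_compat, fact_pos).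
  generalize (mpow_bound d q D HQ HD HD0 k u i Hi). intros H.
  rewrite Rpow_mult_distr.
  assert (0 <= Rabs h ^ k) by (apply pow_le, Rabs_pos).
  assert (0 < / INR (Factorial.fact k)) by (apply Rinv_0_lt_compat, fact_pos).
  assert (0 <= (2*D)^k) by (apply pow_le; lra).
  replace (norm_inf d u * ((2 * D) ^ k * Rabs h ^ k * / INR (Factorial.fact k)))
    with (Rabs h ^ k * / INR (Factorial.fact k) * ((2 * D) ^ k * norm_inf d u)) by ring.
  apply Rmult_le_compat_l; [|exact H]. apply Rmult_le_pos; lra.
Qed.

Lemma eterm_ex h u i : (i < d)%nat -> ex_series (fun k => Rabs (eterm d q h u i k)).
Proof.
  intros Hi.
  apply (@ex_series_le R_AbsRing R_CompleteNormedModule _ (fun k => norm_inf d u * ((2 * D * Rabs h) ^ k / INR (Factorial.fact k)))).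
  - intros n. change (Rabs (Rabs (eterm d q h u i n)) <= norm_inf d u * ((2 * D * Rabs h) ^ n / INR (Factorial.fact n))).
    rewrite Rabs_Rabsolu. apply eterm_bound; auto.
  - eexists. apply (is_series_scal (norm_inf d u) _ _ (exp_series (2 * D * Rabs h))).
Qed.

Lemma expmv_spec h u i : (i < d)%nat -> is_series (eterm d q h u i) (expmv d h q u i).
Proof.
  intros Hi. destruct (ex_series_Rabs _ (eterm_ex h u i Hi)) as [l Hl].
  apply is_series_Reals. unfold expmv. apply epsilon_spec. exists l.
  apply is_series_Reals. exact Hl.
Qed.

Lemma expmv_lin h u v a b i : (i < d)%nat ->
  expmv d h q (fun j => a * u j + b * v j) i = a * expmv d h q u i + b * expmv d h q v i.
Proof.
  intros Hi.
  rewrite <- (is_series_unique _ _ (expmv_spec h (fun j => a * u j + b * v j) i Hi)).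
  apply is_series_unique.
  eapply is_series_ext; [|apply (series_lin _ _ _ _ a b (expmv_spec h u i Hi) (expmv_spec h v i Hi))].
  intros n. unfold eterm. rewrite mpow_lin. match goal with |- ?x = ?y => change (@eq R x y) end. ring.
Qed.
Lemma expmv_ext h u v i : (i < d)%nat -> (forall j, (j < d)%nat -> u j = v j) ->
  expmv d h q u i = expmv d h q v i.
Proof.
  intros Hi H.
  rewrite <- (is_series_unique _ _ (expmv_spec h u i Hi)).
  apply is_series_unique.
  eapply is_series_ext; [|apply (expmv_spec h v i Hi)].
  intros n. unfold eterm. rewrite (mpow_ext d q n u v); auto.
Qed.

Lemma expmv_const h c i : (i < d)%nat -> expmv d h q (fun _ => c) i = c.
Proof.
  intros Hi. rewrite <- (is_series_unique _ _ (expmv_spec h (fun _ => c) i Hi)).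
  apply is_series_unique. apply series_const_partial.
  induction n; simpl.
  - unfold eterm; simpl. field.
  - rewrite IHn. unfold eterm. rewrite (mpow_const d q HQ); auto. ring.
Qed.

Lemma expmv_diff h u i : (i < d)%nat ->
  Rabs (expmv d h q u i - u i) <= norm_inf d u * (exp (2 * D * Rabs h) - 1).
Proof.
  intros Hi.
  set (x := 2 * D * Rabs h).
  assert (Hs : is_series (fun k => eterm d q h u i (S k)) (expmv d h q u i - u i)).
  { apply is_series_incr_1.
    match goal with |- is_series _ ?l => replace l with (expmv d h q u i) end.
    apply expmv_spec; auto.
    unfold eterm; simpl. change (plus ?a ?b) with (a + b). field. }
  assert (Hb : is_series (fun k => norm_inf d u * (x ^ (S k) / INR (Factorial.fact (S k)))) (norm_inf d u * (exp x - 1))).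
  { eapply is_series_ext; [|apply (is_series_scal (norm_inf d u) (fun k => x ^ (S k) / INR (Factorial.fact (S k))))].
    { intros n; reflexivity. }
    apply (is_series_incr_1 (fun k => x ^ k / INR (Factorial.fact k))).
    match goal with |- is_series _ ?l => replace l with (exp x) end. apply exp_series.
    simpl. change (plus ?a ?b) with (a + b). field. }
  apply Rabs_le. split.
  - assert (Hb' := is_series_opp _ _ Hb).
    assert (-(norm_inf d u * (exp x - 1)) <= expmv d h q u i - u i); [|lra].
    apply (series_le _ _ _ _ Hb' Hs). intros n.
    generalize (eterm_bound h u i (S n) Hi). fold x. intros H.
    apply Rabs_le_between in H. change (opp ?a) with (- a). lra.
  - apply (series_le _ _ _ _ Hs Hb). intros n.
    generalize (eterm_bound h u i (S n) Hi). fold x. intros H.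
    apply Rabs_le_between in H. lra.
Qed.
End EX.

Lemma C_n0 n : C n 0 = 1.
Proof. unfold C. rewrite Nat.sub_0_r. simpl. field. apply Rgt_not_eq, INR_fact_lt_0. Qed.

Lemma C_nn n : C n n = 1.
Proof. unfold C. rewrite Nat.sub_diag. simpl. field. apply Rgt_not_eq, INR_fact_lt_0. Qed.

Lemma binom_step (X v : nat -> R) n :
  sum_f_R0 (fun k => C (S n) k * X k * v (S n - k)%nat) (S n) =
  sum_f_R0 (fun k => C n k * X k * v (S n - k)%nat) n +
  sum_f_R0 (fun k => C n k * X (S k) * v (n - k)%nat) n.
Proof.
  destruct n as [|m].
  - simpl. rewrite !C_n0, C_nn. ring.
  - rewrite (decomp_sum _ (S (S m))) by lia. simpl Init.Nat.pred.
    rewrite tech5.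
    rewrite (decomp_sum (fun k => C (S m) k * X k * v (S (S m) - k)%nat) (S m)) by lia.
    simpl Init.Nat.pred. rewrite tech5.
    rewrite (sum_eq (fun i => C (S (S m)) (S i) * X (S i) * v (S (S m) - S i)%nat)
               (fun i => C (S m) i * X (S i) * v (S m - i)%nat + C (S m) (S i) * X (S i) * v (S m - i)%nat)).
    + rewrite sum_plus. rewrite !C_n0, !C_nn. rewrite !Nat.sub_diag. simpl Nat.sub. ring.
    + intros i Hi. rewrite <- pascal by lia. change (S (S m) - S i)%nat with (S m - i)%nat. ring.
Qed.

Lemma mv_scal d q w c i : mv d q (fun j => c * w j) i = c * mv d q w i.
Proof.
  unfold mv. rewrite (sumR_ext _ _ (fun j => c * (q i j * w j) + 0 * 0)) by (intros; ring).
  rewrite sumR_lin. ring.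
Qed.

Lemma mv_sum d q (g : nat -> vec) n i :
  mv d q (fun j => sum_f_R0 (fun k => g k j) n) i = sum_f_R0 (fun k => mv d q (g k) i) n.
Proof.
  unfold mv. rewrite <- sumR_sum. apply sumR_ext. intros j _.
  rewrite scal_sum. apply sum_eq; intros; ring.
Qed.

Section POS.
Variables (d : nat) (q : mat) (D : R).
Hypothesis HQ : is_Qmatrix d q.
Hypothesis HD : forall i, (i < d)%nat -> - q i i <= D.
Hypothesis HD0 : 0 <= D.

Definition Tn n (u : vec) : vec := fun i =>
  sum_f_R0 (fun k => C n k * D ^ k * mpowv d q (n - k) u i) n.

Lemma Tn_rec n u i : Tn (S n) u i = mv d q (Tn n u) i + D * Tn n u i.
Proof.
  unfold Tn at 1. rewrite (binom_step (fun k => D ^ k) (fun m => mpowv d q m u i) n). unfold Tn. rewrite mv_sum. f_equal.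
  - apply sum_eq. intros k Hk. rewrite mv_scal.
    replace (S n - k)%nat with (S (n - k)) by lia. reflexivity.
  - rewrite scal_sum. apply sum_eq. intros; simpl; ring.
Qed.

Lemma Tn_nonneg u : (forall j, (j < d)%nat -> 0 <= u j) ->
  forall n i, (i < d)%nat -> 0 <= Tn n u i.
Proof.
  destruct HQ as [H1 [H2 H3]].
  intros Hu n. induction n; intros i Hi.
  - unfold Tn. simpl. rewrite C_n0. simpl. specialize (Hu i Hi). lra.
  - rewrite Tn_rec.
    replace (mv d q (Tn n u) i + D * Tn n u i) with
      (sumR d (fun j => 1 * (q i j * Tn n u j) + 1 * (if Nat.eq_dec j i then D * Tn n u i else 0))).
    + apply Rle_trans with (sumR d (fun _ => 0)); [rewrite sumR_zero; lra|]. apply sumR_le. intros j Hj.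
      destruct (Nat.eq_dec j i).
      * subst j. specialize (HD i Hi). specialize (IHn i Hi). nra.
      * assert (0 <= q i j) by (apply H2; auto). specialize (IHn j Hj). nra.
    + rewrite sumR_lin, sumR_ind; auto. unfold mv. ring.
Qed.

Lemma expmv_pos h u i : 0 <= h -> (i < d)%nat -> (forall j, (j < d)%nat -> 0 <= u j) ->
  0 <= expmv d h q u i.
Proof.
  intros Hh Hi Hu.
  assert (Hm := is_series_mult _ _ _ _ (exp_series (D * h)) (expmv_spec d q D HQ HD HD0 h u i Hi)).
  assert (Hp : 0 <= exp (D * h) * expmv d h q u i).
  { eapply series_nonneg.
    - apply Hm.
      + eexists. eapply is_series_ext; [|apply (exp_series (D * h))].
        intros n. simpl. rewrite Rabs_right; auto.
        apply Rle_ge. apply Rmult_le_pos; [apply pow_le; nra|].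
        apply Rlt_le, Rinv_0_lt_compat, INR_fact_lt_0.
      + apply (eterm_ex d q D HQ HD HD0 h u i Hi).
    - intros n. simpl.
      rewrite (sum_eq _ (fun k => (C n k * D ^ k * mpowv d q (n - k) u i) * (h ^ n / INR (Factorial.fact n)))).
      + rewrite <- scal_sum. rewrite Rmult_comm. apply Rmult_le_pos.
        * apply (Tn_nonneg u Hu n i Hi).
        * apply Rmult_le_pos; [apply pow_le; lra|]. apply Rlt_le, Rinv_0_lt_compat, INR_fact_lt_0.
      + intros k Hk. unfold eterm, C.
        replace (h ^ n) with (h ^ k * h ^ (n - k)) by (rewrite <- pow_add; f_equal; lia).
        rewrite Rpow_mult_distr. field.
        split; [apply Rgt_not_eq, INR_fact_lt_0|]. split; apply Rgt_not_eq, INR_fact_lt_0. }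
  assert (0 < exp (D * h)) by apply exp_pos. nra.
Qed.
End POS.

Lemma series_evconst (a : nat -> R) c N :
  (forall n, (N <= n)%nat -> sum_f_R0 a n = c) -> is_series a c.
Proof.
  intros H. apply is_series_Reals. intros eps Heps. exists N. intros n Hn.
  rewrite H by lia. unfold R_dist. rewrite Rminus_diag, Rabs_R0. lra.
Qed.

Lemma pow_fact_le x n : 0 <= x -> x ^ n / INR (Factorial.fact n) <= exp x.
Proof.
  intros Hx.
  set (b := fun k => x ^ k / INR (Factorial.fact k)).
  assert (Hb : forall k, 0 <= b k).
  { intros k. unfold b. apply Rmult_le_pos; [apply pow_le; auto|].
    apply Rlt_le, Rinv_0_lt_compat, INR_fact_lt_0. }
  assert (H1 : sum_f_R0 b n <= exp x).
  { apply (series_le (fun k => if Nat.leb k n then b k else 0) b); [| apply exp_series |].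
    - apply (series_evconst _ _ n). intros m Hm.
      induction Hm.
      + apply sum_eq. intros i Hi. destruct (Nat.leb i n) eqn:E; auto.
        apply Nat.leb_gt in E. lia.
      + rewrite tech5, IHHm. destruct (Nat.leb (S m) n) eqn:E; [apply Nat.leb_le in E; lia| ring].
    - intros k. destruct (Nat.leb k n); [lra| apply Hb]. }
  destruct n.
  - simpl in H1. exact H1.
  - rewrite tech5 in H1. assert (0 <= sum_f_R0 b n).
    { apply cond_pos_sum. auto. }
    fold (b (S n)). lra.
Qed.

Lemma integ_gen g a b (pr : Riemann_integrable g a b) : integ g a b = RiemannInt pr.
Proof.
  unfold integ.
  assert (Hs : exists pr' : Riemann_integrable g a b, RiemannInt pr' = epsilon (inhabits 0)
      (fun l => exists pr0 : Riemann_integrable g a b, RiemannInt pr0 = l)).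
  { apply epsilon_spec. exists (RiemannInt pr). exists pr. auto. }
  destruct Hs as [pr' Hpr']. rewrite <- Hpr'. apply RiemannInt_P5.
Qed.

Section CONT.
Variables (d : nat) (q : mat) (D : R).
Hypothesis HQ : is_Qmatrix d q.
Hypothesis HD : forall i, (i < d)%nat -> - q i i <= D.
Hypothesis HD0 : 0 <= D.

Lemma expmv_contr h u i : 0 <= h -> (i < d)%nat -> Rabs (expmv d h q u i) <= norm_inf d u.
Proof.
  intros Hh Hi. set (c := norm_inf d u).
  assert (A := expmv_lin d q D HQ HD HD0 h (fun _ => c) u 1 (-1) i Hi).
  assert (B := expmv_lin d q D HQ HD HD0 h (fun _ => c) u 1 1 i Hi).
  cbv beta in A, B. rewrite (expmv_const d q D HQ HD HD0) in A, B; auto.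
  assert (PA := expmv_pos d q D HQ HD HD0 h (fun j => 1 * c + -1 * u j) i Hh Hi).
  assert (PB := expmv_pos d q D HQ HD HD0 h (fun j => 1 * c + 1 * u j) i Hh Hi).
  rewrite A in PA. rewrite B in PB.
  assert (forall j, (j < d)%nat -> Rabs (u j) <= c) by (intros; apply norm_ge; auto).
  apply Rabs_le.
  assert (0 <= 1 * c + -1 * expmv d h q u i).
  { apply PA. intros j Hj. specialize (H j Hj). apply Rabs_le_between in H. lra. }
  assert (0 <= 1 * c + 1 * expmv d h q u i).
  { apply PB. intros j Hj. specialize (H j Hj). apply Rabs_le_between in H. lra. }
  lra.
Qed.

Lemma expmv_cont u i s : (i < d)%nat -> continuity_pt (fun s => expmv d s q u i) s.
Proof.
  intros Hi.
  set (a := fun k => mpowv d q k u i / INR (Factorial.fact k)).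
  assert (E : (fun s => expmv d s q u i) = PSeries a).
  { apply functional_extensionality. intros x. symmetry. apply is_pseries_unique.
    apply is_pseries_R. eapply is_series_ext; [|apply (expmv_spec d q D HQ HD HD0 x u i Hi)].
    intros n. unfold eterm, a. unfold Rdiv. match goal with |- ?x = ?y => change (@eq R x y) end. ring. }
  rewrite E. apply PSeries_continuity.
  set (r := Rabs s + 1).
  assert (Hr : Rbar_le (Finite r) (CV_radius a)).
  { destruct (CV_radius_bounded a) as [Hub _]. apply Hub.
    exists (norm_inf d u * exp (2 * D * r)). intros n.
    assert (0 <= r) by (unfold r; generalize (Rabs_pos s); lra).
    unfold a. rewrite Rabs_mult. unfold Rdiv. rewrite Rabs_mult.
    rewrite (Rabs_right (/ INR (Factorial.fact n))) by (apply Rle_ge, Rlt_le, Rinv_0_lt_compat, INR_fact_lt_0).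
    rewrite (Rabs_right (r ^ n)) by (apply Rle_ge, pow_le; auto).
    generalize (mpow_bound d q D HQ HD HD0 n u i Hi). intros H1.
    generalize (pow_fact_le (2 * D * r) n ltac:(nra)). intros H2.
    assert (0 <= / INR (Factorial.fact n)) by (apply Rlt_le, Rinv_0_lt_compat, INR_fact_lt_0).
    assert (0 <= r ^ n) by (apply pow_le; auto).
    assert (0 <= norm_inf d u) by apply norm_nonneg.
    apply Rle_trans with ((2 * D) ^ n * norm_inf d u * / INR (Factorial.fact n) * r ^ n).
    - apply Rmult_le_compat_r; auto. apply Rmult_le_compat_r; auto.
    - rewrite Rpow_mult_distr in H2. unfold Rdiv in H2.
      replace ((2 * D) ^ n * norm_inf d u * / INR (Factorial.fact n) * r ^ n)
        with (norm_inf d u * ((2 * D) ^ n * r ^ n * / INR (Factorial.fact n))) by ring.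
      apply Rmult_le_compat_l; auto. }
  destruct (CV_radius a); simpl in *; auto; unfold r in Hr; lra.
Qed.

Lemma integ_val u i h : (i < d)%nat -> 0 <= h ->
  exists pr : Riemann_integrable (fun s => expmv d s q u i) 0 h,
    integ (fun s => expmv d s q u i) 0 h = RiemannInt pr.
Proof.
  intros Hi Hh.
  assert (pr : Riemann_integrable (fun s => expmv d s q u i) 0 h).
  { apply continuity_implies_RiemannInt; auto. intros; apply expmv_cont; auto. }
  exists pr. apply integ_gen.
Qed.

Lemma integ_nonpos u i h : (i < d)%nat -> 0 <= h -> (forall j, (j < d)%nat -> u j <= 0) ->
  integ (fun s => expmv d s q u i) 0 h <= 0.
Proof.
  intros Hi Hh Hu. destruct (integ_val u i h Hi Hh) as [pr E]. rewrite E.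
  apply Rle_trans with (RiemannInt (RiemannInt_P14 0 h 0));
    [| rewrite RiemannInt_P15; lra].
  apply RiemannInt_P19; auto. intros x Hx. unfold fct_cte.
  assert (A := expmv_lin d q D HQ HD HD0 x u u (-1) 0 i Hi).
  assert (P := expmv_pos d q D HQ HD HD0 x (fun j => -1 * u j + 0 * u j) i ltac:(lra) Hi).
  rewrite A in P. assert (0 <= -1 * expmv d x q u i + 0 * expmv d x q u i).
  { apply P. intros j Hj. specialize (Hu j Hj). lra. }
  lra.
Qed.
End CONT.

Lemma integ_zero d q D (HQ : is_Qmatrix d q) (HD : forall i, (i < d)%nat -> - q i i <= D) (HD0 : 0 <= D)
  u i h : (i < d)%nat -> (forall j, (j < d)%nat -> u j = 0) ->
  integ (fun s => expmv d s q u i) 0 h = 0.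
Proof.
  intros Hi Hu.
  assert (E : (fun s => expmv d s q u i) = fct_cte 0).
  { apply functional_extensionality. intros s. unfold fct_cte.
    rewrite (expmv_ext d q D HQ HD HD0 s u (fun _ => 0)); auto.
    apply (expmv_const d q D HQ HD HD0); auto. }
  rewrite E. rewrite (integ_gen _ _ _ (RiemannInt_P14 0 h 0)). rewrite RiemannInt_P15. ring.
Qed.

Lemma last_cons (a : R) l dflt : last (a :: l) dflt = last l a.
Proof.
  assert (H : forall l (b d1 d2 : R), last (b :: l) d1 = last (b :: l) d2).
  { intros l0; induction l0 as [|x l0 IH]; intros; [reflexivity|].
    change (last (x :: l0) d1 = last (x :: l0) d2). apply IH. }
  destruct l as [|b l]; [reflexivity|].
  change (last (b :: l) dflt = last (b :: l) a). apply H.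
Qed.

Lemma sorted_last a l : Sorted Rlt (a :: l) -> a <= last l a.
Proof.
  revert a; induction l; intros b H; [simpl; lra|].
  apply Sorted_inv in H. destruct H as [H2 H3].
  apply HdRel_inv in H3.
  specialize (IHl a H2). rewrite last_cons. lra.
Qed.

Lemma Rsup_spec E : bound E -> (exists x, E x) -> is_lub E (Rsup E).
Proof.
  intros Hb He. destruct (completeness E Hb He) as [m Hm].
  unfold Rsup. apply epsilon_spec. exists m; auto.
Qed.

Lemma small_bound x : 0 <= x -> exp x - 1 <= 4 * x \/ 2 <= 4 * x.
Proof.
  intros Hx. destruct (Rle_lt_dec (1/2) x); [right; lra|left].
  generalize (exp_ineq1_le (- x)). rewrite exp_Ropp. intros H.
  assert (0 < exp x) by apply exp_pos.
  assert (exp x * (1 - x) <= 1).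
  { apply Rmult_le_reg_r with (/ exp x). apply Rinv_0_lt_compat; auto.
    replace (exp x * (1 - x) * / exp x) with (1 - x) by (field; lra). lra. }
  nra.
Qed.

Section MAIN.
Variables (d : nat) (P : mat -> Prop) (f : mat -> vec) (q0 : mat) (D : R).
Hypothesis HQ : forall q, P q -> is_Qmatrix d q.
Hypothesis Hq0 : P q0.
Hypothesis Hf0 : forall i, (i < d)%nat -> f q0 i = 0.
Hypothesis Hfneg : forall q, P q -> forall i, (i < d)%nat -> f q i <= 0.
Hypothesis HDall : forall q, P q -> forall i, (i < d)%nat -> - q i i <= D.
Hypothesis HD0 : 0 <= D.

Definition LL := 8 * D + 1.

Lemma LL_pos : 0 < LL.
Proof. unfold LL; lra. Qed.

Lemma expmv_near q h u i : P q -> 0 <= h -> (i < d)%nat ->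
  Rabs (expmv d h q u i - u i) <= LL * h * norm_inf d u.
Proof.
  intros Hq Hh Hi.
  assert (A := expmv_diff d q D (HQ q Hq) (HDall q Hq) HD0 h u i Hi).
  rewrite (Rabs_right h) in A by lra.
  assert (B := expmv_contr d q D (HQ q Hq) (HDall q Hq) HD0 h u i Hh Hi).
  assert (Cn := norm_ge d u i Hi).
  assert (N0 := norm_nonneg d u).
  assert (E : LL * h * norm_inf d u = 8 * D * h * norm_inf d u + h * norm_inf d u) by (unfold LL; ring).
  assert (0 <= h * norm_inf d u) by nra.
  destruct (small_bound (2 * D * h)) as [S|S]; [nra| |].
  - apply Rle_trans with (norm_inf d u * (4 * (2 * D * h))).
    + eapply Rle_trans; [exact A|]. apply Rmult_le_compat_l; auto.
    + nra.
  - apply Rle_trans with (2 * norm_inf d u).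
    + eapply Rle_trans; [apply Rabs_triang|]. rewrite Rabs_Ropp. lra.
    + nra.
Qed.

Lemma Sq_upper q h u i : P q -> 0 <= h -> (i < d)%nat -> Sq d q (f q) h u i <= expmv d h q u i.
Proof.
  intros Hq Hh Hi. unfold Sq.
  assert (integ (fun s => expmv d s q (f q) i) 0 h <= 0).
  { apply (integ_nonpos d q D (HQ q Hq) (HDall q Hq) HD0); auto. }
  lra.
Qed.

Lemma Sq_q0 h u i : (i < d)%nat -> Sq d q0 (f q0) h u i = expmv d h q0 u i.
Proof.
  intros Hi. unfold Sq.
  rewrite (integ_zero d q0 D (HQ q0 Hq0) (HDall q0 Hq0) HD0); auto. ring.
Qed.

Lemma Sq_diff q h u v i N : P q -> 0 <= h -> (i < d)%nat -> 0 <= N ->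
  (forall j, (j < d)%nat -> Rabs (u j - v j) <= N) ->
  Sq d q (f q) h u i <= Sq d q (f q) h v i + N.
Proof.
  intros Hq Hh Hi HN Huv. unfold Sq.
  assert (A := expmv_lin d q D (HQ q Hq) (HDall q Hq) HD0 h u v 1 (-1) i Hi).
  assert (B := expmv_contr d q D (HQ q Hq) (HDall q Hq) HD0 h (fun j => 1 * u j + -1 * v j) i Hh Hi).
  rewrite A in B.
  assert (norm_inf d (fun j => 1 * u j + -1 * v j) <= N).
  { apply norm_le; auto. intros j Hj. replace (1 * u j + -1 * v j) with (u j - v j) by ring. auto. }
  apply Rabs_le_between in B. lra.
Qed.

Lemma Ecal_lub h u i : 0 <= h -> (i < d)%nat ->
  is_lub (fun x => exists q, P q /\ x = Sq d q (f q) h u i) (Ecal d P f h u i).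
Proof.
  intros Hh Hi. unfold Ecal. apply Rsup_spec.
  - exists (norm_inf d u). intros x [q [Hq ->]].
    eapply Rle_trans; [apply Sq_upper; auto|].
    eapply Rle_trans; [apply Rle_abs|]. apply (expmv_contr d q D (HQ q Hq) (HDall q Hq) HD0); auto.
  - exists (Sq d q0 (f q0) h u i). exists q0; auto.
Qed.

Lemma Ecal_near h u i : 0 <= h -> (i < d)%nat ->
  Rabs (Ecal d P f h u i - u i) <= LL * h * norm_inf d u.
Proof.
  intros Hh Hi. destruct (Ecal_lub h u i Hh Hi) as [Hub Hl].
  apply Rabs_le. split.
  - assert (Sq d q0 (f q0) h u i <= Ecal d P f h u i) by (apply Hub; exists q0; auto).
    rewrite Sq_q0 in H by auto.
    assert (A := expmv_near q0 h u i Hq0 Hh Hi). apply Rabs_le_between in A. lra.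
  - assert (Ecal d P f h u i <= u i + LL * h * norm_inf d u); [|lra].
    apply Hl. intros x [q [Hq ->]].
    eapply Rle_trans; [apply Sq_upper; auto|].
    assert (A := expmv_near q h u i Hq Hh Hi). apply Rabs_le_between in A. lra.
Qed.

Lemma Ecal_le h u v i N : 0 <= h -> (i < d)%nat -> 0 <= N ->
  (forall j, (j < d)%nat -> Rabs (u j - v j) <= N) ->
  Ecal d P f h u i <= Ecal d P f h v i + N.
Proof.
  intros Hh Hi HN Huv.
  destruct (Ecal_lub h u i Hh Hi) as [_ Hl]. destruct (Ecal_lub h v i Hh Hi) as [Hub _].
  assert (Ecal d P f h u i - N <= Ecal d P f h v i); [|lra].
  apply Rle_trans with (Ecal d P f h u i - N); [lra|].
  assert (Ecal d P f h u i <= Ecal d P f h v i + N); [|lra].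
  apply Hl. intros x [q [Hq ->]].
  eapply Rle_trans; [apply (Sq_diff q h u v i N); auto|].
  assert (Sq d q (f q) h v i <= Ecal d P f h v i) by (apply Hub; exists q; auto). lra.
Qed.

Lemma Epi_aux_near rest : forall tprev u, Sorted Rlt (tprev :: rest) ->
  forall i, (i < d)%nat ->
  Rabs (Epi_aux d P f tprev rest u i - u i) <= LL * (last rest tprev - tprev) * norm_inf d u.
Proof.
  induction rest as [|t1 rest IH]; intros tprev u Hs i Hi.
  - simpl. rewrite Rminus_diag, Rabs_R0. lra.
  - simpl Epi_aux. rewrite last_cons.
    assert (Hs' := Hs). apply Sorted_inv in Hs'. destruct Hs' as [Hs1 Hh].
    apply HdRel_inv in Hh.
    assert (Hl := sorted_last t1 rest Hs1).
    set (w := Epi_aux d P f t1 rest u).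
    set (N := LL * (last rest t1 - t1) * norm_inf d u).
    assert (HN : 0 <= N).
    { unfold N. apply Rmult_le_pos; [apply Rmult_le_pos; [generalize LL_pos; lra| lra]| apply norm_nonneg]. }
    assert (Hw : forall j, (j < d)%nat -> Rabs (w j - u j) <= N) by (intros; apply IH; auto).
    assert (Hw' : forall j, (j < d)%nat -> Rabs (u j - w j) <= N)
      by (intros; rewrite Rabs_minus_sym; auto).
    assert (A := Ecal_le (t1 - tprev) w u i N ltac:(lra) Hi HN Hw).
    assert (B := Ecal_le (t1 - tprev) u w i N ltac:(lra) Hi HN Hw').
    assert (E := Ecal_near (t1 - tprev) u i ltac:(lra) Hi).
    apply Rabs_le_between in E. apply Rabs_le.
    assert (LL * (last rest t1 - tprev) * norm_inf d u = N + LL * (t1 - tprev) * norm_inf d u)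
      by (unfold N; ring).
    lra.
Qed.

Lemma Epi_near t l u i : partition_of t l -> (i < d)%nat ->
  Rabs (Epi d P f l u i - u i) <= LL * t * norm_inf d u.
Proof.
  intros [[rest ->] [Hs Hl]] Hi.
  destruct rest as [|t1 rest].
  - simpl in Hl. subst t. simpl. apply Ecal_near; auto; lra.
  - unfold Epi. rewrite last_cons in Hl. rewrite <- Hl.
    replace (last (t1 :: rest) 0) with (last (t1 :: rest) 0 - 0) by ring.
    apply Epi_aux_near; auto.
Qed.

Lemma Nisio_near t u i : 0 <= t -> (i < d)%nat ->
  Rabs (Nisio d P f t u i - u i) <= LL * t * norm_inf d u.
Proof.
  intros Ht Hi.
  assert (Hex : exists l, partition_of t l).
  { destruct (Rle_lt_or_eq_dec 0 t Ht) as [Hlt|Heq].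
    - exists (0 :: t :: nil). split; [eexists; eauto|]. split; [|reflexivity].
      constructor; constructor; auto.
    - subst t. exists (0 :: nil). split; [eexists; eauto|]. split; [|reflexivity].
      constructor; constructor. }
  assert (Hlub : is_lub (fun x => exists l, partition_of t l /\ x = Epi d P f l u i) (Nisio d P f t u i)).
  { unfold Nisio. apply Rsup_spec.
    - exists (u i + LL * t * norm_inf d u). intros x [l [Hp ->]].
      assert (A := Epi_near t l u i Hp Hi). apply Rabs_le_between in A. lra.
    - destruct Hex as [l Hl]. eexists; exists l; split; eauto. }
  destruct Hlub as [Hub Hl].
  destruct Hex as [l0 Hl0].
  assert (A := Epi_near t l0 u i Hl0 Hi). apply Rabs_le_between in A.
  assert (Epi d P f l0 u i <= Nisio d P f t u i) by (apply Hub; exists l0; auto).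
  assert (Nisio d P f t u i <= u i + LL * t * norm_inf d u).
  { apply Hl. intros x [l [Hp ->]].
    assert (B := Epi_near t l u i Hp Hi). apply Rabs_le_between in B. lra. }
  apply Rabs_le. lra.
Qed.
End MAIN.

Lemma D_bound d (P : mat -> Prop) (f : mat -> vec)
  (HQ : forall q, P q -> is_Qmatrix d q)
  (Hfin : forall (u : vec) i, (i < d)%nat ->
            bound (fun x => exists q, P q /\ x = mv d q u i + f q i))
  (Hfbdd : exists C, forall q, P q -> norm_inf d (f q) <= C) :
  exists D, 0 <= D /\ forall q, P q -> forall i, (i < d)%nat -> - q i i <= D.
Proof.
  destruct Hfbdd as [C HC].
  assert (Hone : forall i, (i < d)%nat -> exists m, forall q, P q -> - q i i <= m).
  { intros i Hi.
    destruct (Hfin (fun j => if Nat.eq_dec j i then 0 else 1) i Hi) as [m Hm].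
    exists (m + C). intros q Hq.
    assert (E : mv d q (fun j => if Nat.eq_dec j i then 0 else 1) i = - q i i).
    { unfold mv. destruct (HQ q Hq) as [_ [_ H3]].
      rewrite (sumR_ext _ _ (fun j => 1 * q i j + 1 * (if Nat.eq_dec j i then - q i i else 0))).
      - rewrite sumR_lin, H3, sumR_ind; auto. ring.
      - intros j Hj. destruct (Nat.eq_dec j i); [subst; ring| ring]. }
    assert (mv d q (fun j => if Nat.eq_dec j i then 0 else 1) i + f q i <= m).
    { apply Hm. exists q; auto. }
    assert (Rabs (f q i) <= C).
    { eapply Rle_trans; [apply norm_ge; eauto| apply HC; auto]. }
    apply Rabs_le_between in H0. lra. }
  assert (Hall : forall n, (n <= d)%nat -> exists B, forall q, P q -> forall i, (i < n)%nat -> - q i i <= B).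
  { induction n; intros Hn.
    - exists 0. intros; lia.
    - destruct IHn as [B HB]; [lia|]. destruct (Hone n ltac:(lia)) as [m Hm].
      exists (Rmax B m). intros q Hq i Hi.
      destruct (Nat.eq_dec i n).
      + subst. eapply Rle_trans; [apply Hm; auto| apply Rmax_r].
      + eapply Rle_trans; [apply HB; auto; lia| apply Rmax_l]. }
  destruct (Hall d (Nat.le_refl d)) as [B HB].
  exists (Rmax B 0). split; [apply Rmax_r|].
  intros q Hq i Hi. eapply Rle_trans; [apply HB; auto| apply Rmax_l].
Qed.

Theorem mainTheorem13 (d : nat) (P : mat -> Prop) (f : mat -> vec) (q0 : mat)
  (HQ : forall q, P q -> is_Qmatrix d q)
  (Hq0 : P q0)
  (Hf0 : forall i, (i < d)%nat -> f q0 i = 0)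
  (Hsupf : forall i, (i < d)%nat -> is_lub (fun x => exists q, P q /\ x = f q i) 0)
  (Hfin : forall (u : vec) i, (i < d)%nat ->
            bound (fun x => exists q, P q /\ x = mv d q u i + f q i))
  (Hfbdd : exists C, forall q, P q -> norm_inf d (f q) <= C) :
  exists L, 0 < L /\
    forall (t : R) (u0 : vec), 0 <= t ->
      norm_inf d (fun i => Nisio d P f t u0 i - u0 i) <= L * t * norm_inf d u0.
Proof.
  destruct (D_bound d P f HQ Hfin Hfbdd) as [D [HD0 HD]].
  assert (Hfneg : forall q, P q -> forall i, (i < d)%nat -> f q i <= 0).
  { intros q Hq i Hi. destruct (Hsupf i Hi) as [Hub _]. apply Hub. exists q; auto. }
  exists (LL D). split; [unfold LL; lra|].
  intros t u0 Ht. apply norm_le.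
  - apply Rmult_le_pos; [apply Rmult_le_pos; [unfold LL; lra|auto]| apply norm_nonneg].
  - intros i Hi. eapply Nisio_near; eauto.
Qed.
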